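(* Let $G$ be a graph of diameter at most 3. If $G$ admits a tree 3-spanner, then $G$ admits a tree 3-spanner of diameter at most 5.
   Context: Graphs are finite, simple and loopless. The diameter of a graph is the maximum distance between pairs of its vertices. A tree 3-spanner of $G$ is a spanning subgraph $T$ of $G$ that is a tree and satisfies $d_T(a,b)\le 3\,d_G(a,b)$ for all vertices $a,b$ of $G$. *)

(* Defs.v *)
From mathcomp Require Import all_boot.
Set Implicit Arguments. Unset Strict Implicit. Unset Printing Implicit Defensive.

Section Graphs.
Variable V : finType.

Definition simple_graph (e : rel V) : Prop :=
  symmetric e /\ irreflexive e.

Definition walk (e : rel V) (x y : V) (n : nat) : Prop :=
  exists p : seq V, [/\ size p = n, path e x p & last x p = y].

Definition dist_le (e : rel V) (x y : V) (n : nat) : Prop :=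
  exists m, m <= n /\ walk e x y m.

Definition connected (e : rel V) : Prop :=
  forall x y : V, exists n, dist_le e x y n.

(* no cycle: no sequence of >= 3 distinct vertices x, p_1, ..., p_k
   forming a path that closes up with an edge back to x *)
Definition acyclic (e : rel V) : Prop :=
  forall (x : V) (p : seq V),
    uniq (x :: p) -> 2 <= size p -> path e x p -> ~~ e (last x p) x.

Definition diam_le (e : rel V) (k : nat) : Prop :=
  forall x y : V, dist_le e x y k.

Definition spanning_tree (e t : rel V) : Prop :=
  [/\ simple_graph t, subrel t e, connected t & acyclic t].

Definition tree_3_spanner (e t : rel V) : Prop :=
  spanning_tree e t /\
  forall (a b : V) (n : nat), dist_le e a b n -> dist_le t a b (3 * n).

End Graphs.

(* Main.v *)
Require Import Defs.
From mathcomp Require Import all_boot.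
From mathcomp Require Import zify.
Set Implicit Arguments. Unset Strict Implicit. Unset Printing Implicit Defensive.

Lemma walk_cat (V : finType) (e : rel V) x y z m n :
  walk e x y m -> walk e y z n -> walk e x z (m + n).
Proof.
move=> [p [sp pp lp]] [q [sq pq lq]]; exists (p ++ q); split.
- by rewrite size_cat sp sq.
- by rewrite cat_path pp lp pq.
- by rewrite last_cat lp lq.
Qed.

Lemma dist_le_trans (V : finType) (e : rel V) x y z m n :
  dist_le e x y m -> dist_le e y z n -> dist_le e x z (m + n).
Proof.
move=> [m' [hm w1]] [n' [hn w2]]; exists (m' + n'); split; first by lia.
exact: walk_cat w1 w2.
Qed.

Lemma dist_le_mono (V : finType) (e : rel V) x y m n :
  m <= n -> dist_le e x y m -> dist_le e x y n.
Proof. by move=> hmn [k [hk w]]; exists k; split => //; lia. Qed.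

Lemma dist_le_refl (V : finType) (e : rel V) x n : dist_le e x x n.
Proof. by exists 0; split => //; exists [::]. Qed.

Lemma dist_le_edge (V : finType) (e : rel V) x y : e x y -> dist_le e x y 1.
Proof. by move=> h; exists 1; split => //; exists [:: y]; rewrite /= h. Qed.

Lemma dist_le_sym (V : finType) (e : rel V) x y n :
  symmetric e -> dist_le e x y n -> dist_le e y x n.
Proof.
move=> sym [k [hk [p [sp pp lp]]]]; exists k; split => //.
exists (rev (belast x p)); split.
- by rewrite size_rev size_belast.
- rewrite -lp rev_path; apply: sub_path pp => a b /=; by rewrite sym.
- case: p sp pp lp => [|a p] /= _ _ lp; first by rewrite lp.
  by rewrite rev_cons last_rcons.
Qed.

Definition near (V : finType) (par : V -> V) (x y : V) (m : nat) : Prop :=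
  exists i j, i + j <= m /\ iter i par x = iter j par y.

Definition pe (V : finType) (par : V -> V) : rel V :=
  fun x y => (x != y) && ((par x == y) || (par y == x)).

Definition ptree (V : finType) (e : rel V) (c : V) (par : V -> V) (dep : V -> nat) : Prop :=
  [/\ par c = c, dep c = 0,
      (forall x, x != c -> dep x = (dep (par x)).+1 /\ e x (par x)) &
      (forall x y, e x y -> near par x y 3)].

Lemma pe_sym (V : finType) (par : V -> V) : symmetric (pe par).
Proof. by move=> x y; rewrite /pe eq_sym orbC. Qed.

Lemma near_sym (V : finType) (par : V -> V) x y m : near par x y m -> near par y x m.
Proof. by move=> [i [j [h1 h2]]]; exists j, i; split => //; lia. Qed.

Lemma near_mono (V : finType) (par : V -> V) x y m n :
  m <= n -> near par x y m -> near par x y n.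
Proof. by move=> hmn [i [j [h1 h2]]]; exists i, j; split => //; lia. Qed.

Lemma up_dist (V : finType) (par : V -> V) x k : dist_le (pe par) x (iter k par x) k.
Proof.
elim: k => [|k IH]; first exact: dist_le_refl.
rewrite iterS; set w := iter k par x in IH *.
have [->|hw] := eqVneq (par w) w.
  by apply: dist_le_mono IH.
have h1 : dist_le (pe par) w (par w) 1.
  by apply: dist_le_edge; rewrite /pe eq_sym hw eqxx.
by have := dist_le_trans IH h1; rewrite addn1.
Qed.

Lemma near_dist (V : finType) (par : V -> V) x y m :
  near par x y m -> dist_le (pe par) x y m.
Proof.
move=> [i [j [hij he]]].
have h1 := up_dist par x i.
have h2 := dist_le_sym (@pe_sym _ par) (up_dist par y j).
rewrite he in h1; apply: dist_le_mono hij _.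
exact: dist_le_trans h1 h2.
Qed.

Lemma near_step (V : finType) (par : V -> V) x y z m :
  near par x y m -> pe par y z -> near par x z m.+1.
Proof.
move=> [i [j [hij he]]] /andP [_ /orP [/eqP hz|/eqP hy]].
- case: j hij he => [|j] hij he.
  + exists i.+1, 0; split; first lia. by rewrite iterS he /= hz.
  + exists i, j; split; first lia. by rewrite he iterSr hz.
- exists i, j.+1; split; first lia. by rewrite he iterSr hy.
Qed.

Lemma dist_near (V : finType) (par : V -> V) x y m :
  dist_le (pe par) x y m -> near par x y m.
Proof.
move=> [k [hk [p [sp pp lp]]]]; apply: near_mono hk _.
rewrite -sp -lp {sp lp}.
elim/last_ind: p pp => [|p z IH]; first by move=> _; exists 0, 0.
rewrite rcons_path => /andP [pp hz].
rewrite size_rcons last_rcons.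
exact: near_step (IH pp) hz.
Qed.

Section PT.
Variables (V : finType) (e : rel V) (c : V) (par : V -> V) (dep : V -> nat).
Hypothesis P : ptree e c par dep.

Lemma pt_root : par c = c. Proof. by case: P. Qed.
Lemma pt_dep0 : dep c = 0. Proof. by case: P. Qed.
Lemma pt_dep x : x != c -> dep x = (dep (par x)).+1.
Proof. by case: P => _ _ h _ /h []. Qed.
Lemma pt_edge x : x != c -> e x (par x).
Proof. by case: P => _ _ h _ /h []. Qed.
Lemma pt_near x y : e x y -> near par x y 3.
Proof. by case: P => _ _ _ h /h. Qed.

Lemma dep_eq0 x : dep x = 0 -> x = c.
Proof. by have [//|/pt_dep ->] := eqVneq x c. Qed.

Lemma dep_par x : dep (par x) = (dep x).-1.
Proof.
have [->|hx] := eqVneq x c; first by rewrite pt_root pt_dep0.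
by rewrite (pt_dep hx).
Qed.

Lemma dep_iter k x : dep (iter k par x) = dep x - k.
Proof.
elim: k => [|k IH]; first by rewrite subn0.
by rewrite iterS dep_par IH; lia.
Qed.

Lemma iter_dep x : iter (dep x) par x = c.
Proof. by apply: dep_eq0; rewrite dep_iter subnn. Qed.

Lemma iter_ge x k : dep x <= k -> iter k par x = c.
Proof. by move=> h; apply: dep_eq0; rewrite dep_iter; lia. Qed.

End PT.

Definition Hm (V : finType) (dep : V -> nat) := \max_(x : V) dep x.
Definition br (V : finType) (par : V -> V) (dep : V -> nat) (x : V) := iter (dep x).-1 par x.
Definition deep2 (V : finType) (par : V -> V) (dep : V -> nat) :=
  [exists a, exists b, [&& dep a == Hm dep, dep b == Hm dep & br par dep a != br par dep b]].
Definition mu (V : finType) (par : V -> V) (dep : V -> nat) :=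
  if deep2 par dep then (Hm dep).*2 else ((Hm dep).*2).-1.

Section PT3.
Variables (V : finType) (e : rel V) (c : V) (par : V -> V) (dep : V -> nat).
Hypothesis P : ptree e c par dep.

Lemma pe_dep x y : pe par x y ->
  (par x = y /\ dep x = (dep y).+1) \/ (par y = x /\ dep y = (dep x).+1).
Proof.
move=> /andP [nxy /orP [/eqP h|/eqP h]].
- left; split => //; have hx : x != c.
    by apply: contra nxy => /eqP hx; rewrite -h hx (pt_root P).
  by rewrite (pt_dep P hx) h.
- right; split => //; have hy : y != c.
    by apply: contra nxy => /eqP hy; rewrite -h hy (pt_root P).
  by rewrite (pt_dep P hy) h.
Qed.

Lemma pt_acyclic : acyclic (pe par).
Proof.
move=> x p Hu Hs Hp; apply/negP => Hl.
set s := x :: p.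
have Hx : x \in s by rewrite inE eqxx.
case: (@arg_maxnP V x [pred y | y \in s] dep Hx) => v /= Hv Hmax.
have Hc : cycle (pe par) s by rewrite /= rcons_path Hp Hl.
case: (rot_to Hv) => i q Hrot.
have Hc' : cycle (pe par) (v :: q) by rewrite -Hrot rot_cycle.
have Hu' : uniq (v :: q) by rewrite -Hrot rot_uniq.
have Hsz : size q = size p.
  by have := congr1 size Hrot; rewrite size_rot /= => -[].
have Hm' : forall y, y \in q -> dep y <= dep v.
  by move=> y hy; apply: Hmax; rewrite /= -(mem_rot i) Hrot inE hy orbT.
clear Hrot; case: q Hc' Hu' Hsz Hm' => [|u [|w q']] //=; first by move=> _ _ h; rewrite -h in Hs.
  by move=> _ _ h; rewrite -h in Hs.
rewrite rcons_path => /andP [hvu /and3P [_ _ hlast]] Hu' _ Hm'.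
set z := last w q' in hlast.
have hzm : z \in w :: q' by apply: mem_last.
have hzu : z != u.
  move: Hu'; rewrite /= !inE => /and4P [_ hu _ _].
  by apply: contraNneq hu => <-; move: hzm; rewrite inE.
have hdu : dep u <= dep v by apply: Hm'; rewrite inE eqxx.
have hdz : dep z <= dep v by apply: Hm'; rewrite inE hzm orbT.
have e1 : par v = u.
  case: (pe_dep hvu) => [[h _]|[_ h]]; first exact: h.
  by rewrite h in hdu; rewrite ltnn in hdu.
have e2 : par v = z.
  case: (pe_dep hlast) => [[_ h]|[h _]]; last exact: h.
  by rewrite h in hdz; rewrite ltnn in hdz.
by move: hzu; rewrite -e1 -e2 eqxx.
Qed.

Lemma pt_connected : connected (pe par).
Proof.
move=> x y; exists (dep x + dep y); apply: near_dist.
by exists (dep x), (dep y); split => //; rewrite !(iter_dep P).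
Qed.

Hypothesis Hsym : symmetric e.

Lemma pt_subrel : subrel (pe par) e.
Proof.
move=> x y /andP [nxy /orP [/eqP h|/eqP h]].
- have hx : x != c by apply: contra nxy => /eqP hx; rewrite -h hx (pt_root P).
  by rewrite -h (pt_edge P hx).
- have hy : y != c by apply: contra nxy => /eqP hy; rewrite -h hy (pt_root P).
  by rewrite Hsym -h (pt_edge P hy).
Qed.

Lemma pt_span a b n : dist_le e a b n -> dist_le (pe par) a b (3 * n).
Proof.
move=> [k [hk [p [sp pp lp]]]].
apply: (dist_le_mono (m := 3 * k)); first by lia.
rewrite -sp -lp {sp lp}.
elim/last_ind: p pp => [|p z IH]; first by move=> _; apply: dist_le_refl.
rewrite rcons_path => /andP [pp hz].
rewrite size_rcons last_rcons.
have h1 := near_dist (pt_near P hz).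
have := dist_le_trans (IH pp) h1.
by rewrite mulnS addnC.
Qed.

Lemma pt_tree : tree_3_spanner e (pe par).
Proof.
split; last exact: pt_span.
split.
- split; first exact: pe_sym.
  by move=> x; rewrite /pe eqxx.
- exact: pt_subrel.
- exact: pt_connected.
- exact: pt_acyclic.
Qed.

Lemma mu_diam : mu par dep <= 5 -> diam_le (pe par) 5.
Proof.
move=> hmu x y; apply: near_dist.
have hx : dep x <= Hm dep by apply: leq_bigmax.
have hy : dep y <= Hm dep by apply: leq_bigmax.
have [hs|hs] := leqP (dep x + dep y) 5.
  by exists (dep x), (dep y); split => //; rewrite !(iter_dep P).
move: hmu; rewrite /mu; case: ifP => hd hmu.
  by rewrite -!muln2 in hmu; lia.
have e3 : Hm dep = 3 by rewrite -!muln2 in hmu; lia.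
have ex : dep x = 3 by lia.
have ey : dep y = 3 by lia.
have hb : br par dep x = br par dep y.
  apply/eqP; apply: contraFT hd => hb.
  by apply/existsP; exists x; apply/existsP; exists y; rewrite ex ey e3 hb.
exists 2, 2; split => //.
by move: hb; rewrite /br ex ey.
Qed.

End PT3.

Definition leaf (V : finType) (par : V -> V) (a : V) := forall z, par z != a.
Definition tau (V : finType) (e : rel V) (par : V -> V) (a : V) :=
  if e a (par (par a)) then par (par a) else par (par (par a)).
Definition mpar (V : finType) (e : rel V) (par : V -> V) (M : pred V) (x : V) :=
  if M x then tau e par x else par x.
Definition mdep (V : finType) (e : rel V) (par : V -> V) (dep : V -> nat) (M : pred V) (x : V) :=
  if M x then (dep (tau e par x)).+1 else dep x.

Section Nbr.
Variables (V : finType) (e : rel V) (c : V) (par : V -> V) (dep : V -> nat).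
Hypothesis P : ptree e c par dep.
Hypothesis Hirr : irreflexive e.

Lemma nbr a z : leaf par a -> (forall w, par w = par a -> leaf par w) -> e a z ->
  z = par a \/ z = par (par a) \/ z = par (par (par a)) \/ par z = par a \/ par z = par (par a).
Proof.
move=> la ls haz; have [i [j [hij he]]] := pt_near P haz.
have nl : forall w, par w = a -> False by move=> w hw; move: (la w); rewrite hw eqxx.
case: i j hij he => [|[|[|[|i]]]] [|[|[|[|j]]]] //= hij he; try lia.
all: first [ by move: haz; rewrite he Hirr
           | by exfalso; apply: (nl _ (esym he))
           | by exfalso; have := ls _ (esym he); move/(_ z); rewrite eqxx
           | by left | by right; left | by right; right; left
           | by right; right; right; left | by right; right; right; right ].
Qed.
End Nbr.

Section Move.
Variables (V : finType) (e : rel V) (c : V) (par : V -> V) (dep : V -> nat).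
Hypothesis P : ptree e c par dep.
Hypothesis Hirr : irreflexive e.
Hypothesis Hsym : symmetric e.
Variables (M : pred V) (h : nat).
Hypothesis Hh : 3 <= h.
Hypothesis HM1 : forall a, M a -> dep a = h.
Hypothesis HM2 : forall a, M a -> leaf par a.
Hypothesis HM3 : forall a z, M a -> par z = par a -> leaf par z.
Hypothesis HM4 : forall a z, M a -> par z = par a -> e a z -> M z.
Hypothesis HM5 : forall a, M a -> e a (tau e par a).

Local Notation par' := (mpar e par M).
Local Notation dep' := (mdep e par dep M).

Lemma notM_par x : ~~ M (par x).
Proof. by apply/negP => /HM2 /(_ x); rewrite eqxx. Qed.

Lemma notM_c : ~~ M c.
Proof. by rewrite -(pt_root P) notM_par. Qed.

Lemma notM_tau a : ~~ M (tau e par a).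
Proof. by rewrite /tau; case: ifP => _; apply: notM_par. Qed.

Lemma mpar_nM w : ~~ M w -> par' w = par w.
Proof. by rewrite /mpar => /negbTE ->. Qed.

Lemma mdep_nM w : ~~ M w -> dep' w = dep w.
Proof. by rewrite /mdep => /negbTE ->. Qed.

Lemma iter_keep x k : ~~ M x -> iter k par' x = iter k par x.
Proof.
move=> hx; elim: k => [//|k IH]; rewrite !iterS IH mpar_nM //.
by case: k {IH} => [|k] //=; apply: notM_par.
Qed.

Lemma depM a : M a -> [/\ dep (par a) = h.-1, dep (par (par a)) = h.-2 &
                         dep (par (par (par a))) = h - 3].
Proof.
move=> ha; have := dep_iter P 1 a; have := dep_iter P 2 a; have := dep_iter P 3 a.
by rewrite /= (HM1 ha) => -> -> ->; split; lia.
Qed.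

Lemma tau_cases a : tau e par a = par (par a) \/ tau e par a = par (par (par a)).
Proof. by rewrite /tau; case: ifP; [left|right]. Qed.

Lemma nearM x y : M x -> e x y -> near par' x y 3.
Proof.
move=> hx hxy.
have pp : forall w, ~~ M w -> par' w = par w := mpar_nM.
have hpx : par' x = tau e par x by rewrite /mpar hx.
have [dp dg ds] := depM hx.
have npg : ~~ M (par (par x)) by apply: notM_par.
have nps : ~~ M (par x) by apply: notM_par.
case: (nbr P Hirr (HM2 hx) (fun w => HM3 (z := w) hx) hxy) => [->|[->|[->|[hy|hy]]]].
- case: (tau_cases x) => ht.
  + by exists 1, 1; split => //=; rewrite hpx ht pp.
  + by exists 1, 2; split => //=; rewrite hpx ht !pp.
- case: (tau_cases x) => ht.
  + by exists 1, 0; split => //=; rewrite hpx ht.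
  + by exists 1, 1; split => //=; rewrite hpx ht pp.
- case: (tau_cases x) => ht.
  + by exists 2, 0; split => //=; rewrite hpx ht pp.
  + by exists 1, 0; split => //=; rewrite hpx ht.
- have hyM : M y by apply: HM4 hx hy hxy.
  have hpy : par' y = tau e par y by rewrite /mpar hyM.
  case: (tau_cases x) => ht; case: (tau_cases y) => ht'; rewrite hy in ht'.
  + by exists 1, 1; split => //=; rewrite hpx hpy ht ht'.
  + by exists 2, 1; split => //=; rewrite hpx hpy ht ht' pp.
  + by exists 1, 2; split => //=; rewrite hpx hpy ht ht' pp.
  + by exists 1, 1; split => //=; rewrite hpx hpy ht ht'.
- have hyc : y != c.
    apply/eqP => hyc; move: hy; rewrite hyc (pt_root P) => hc.
    by move: dg; rewrite -hc (pt_dep0 P); lia.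
  have hyM : ~~ M y.
    apply/negP => /HM1; rewrite (pt_dep P hyc) hy dg; lia.
  case: (tau_cases x) => ht.
  + by exists 1, 1; split => //=; rewrite hpx ht pp // hy.
  + by exists 1, 2; split => //=; rewrite hpx ht !pp // ?hy // notM_par.
Qed.

Lemma move_ptree : ptree e c par' dep'.
Proof.
split.
- by rewrite mpar_nM ?notM_c // (pt_root P).
- by rewrite mdep_nM ?notM_c // (pt_dep0 P).
- move=> x hxc; case hx: (M x).
  + rewrite [mpar _ _ _ x]/mpar hx (mdep_nM (notM_tau _)) /mdep hx.
    by split => //; apply: HM5.
  + rewrite mpar_nM ?hx // mdep_nM ?hx // mdep_nM ?notM_par //.
    exact: (conj (pt_dep P hxc) (pt_edge P hxc)).
- move=> x y hxy; case hx: (M x); first exact: nearM.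
  case hy: (M y).
  + by apply: near_sym; apply: nearM => //; rewrite Hsym.
  + have [i [j [hij he]]] := pt_near P hxy.
    by exists i, j; split => //; rewrite !iter_keep ?hx ?hy.
Qed.

Lemma mdep_le x : dep' x <= dep x.
Proof.
rewrite /mdep; case hx: (M x) => //.
have [dp dg ds] := depM hx; rewrite (HM1 hx).
by case: (tau_cases x) => ->; lia.
Qed.

Lemma mdep_lt x : M x -> dep' x < dep x.
Proof.
move=> hx; rewrite /mdep hx; have [dp dg ds] := depM hx; rewrite (HM1 hx).
by case: (tau_cases x) => ->; lia.
Qed.

Lemma br_keep x : ~~ M x -> br par' dep' x = br par dep x.
Proof. by move=> hx; rewrite /br mdep_nM // iter_keep. Qed.

Lemma Hm_le : Hm dep' <= Hm dep.
Proof.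
apply/bigmax_leqP => x _; apply: leq_trans (mdep_le x) _.
exact: leq_bigmax.
Qed.

End Move.

Definition stuck (V : finType) (e : rel V) (par : V -> V) (a : V) :=
  ~~ e a (par (par a)) && ~~ e a (par (par (par a))).

Definition rpar (V : finType) (c a1 : V) (par : V -> V) (x : V) :=
  if x == a1 then a1 else if x == c then a1 else par x.
Definition rdep (V : finType) (a1 : V) (par : V -> V) (dep : V -> nat) (x : V) :=
  if br par dep x == a1 then (dep x).-1 else (dep x).+1.

Section Br.
Variables (V : finType) (e : rel V) (c : V) (par : V -> V) (dep : V -> nat).
Hypothesis P : ptree e c par dep.
Hypothesis Hirr : irreflexive e.
Hypothesis Hsym : symmetric e.
Local Notation br := (br par dep).

Lemma neq_c x : 1 <= dep x -> x != c.
Proof. by apply: contraTneq => ->; rewrite (pt_dep0 P). Qed.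

Lemma br_par x : 1 <= dep (par x) -> br (par x) = br x.
Proof.
move=> h; have hx : x != c.
  by apply: contraTneq h => ->; rewrite (pt_root P) (pt_dep0 P).
rewrite /br (pt_dep P hx) /=.
by case: (dep (par x)) h => // n _; rewrite iterSr.
Qed.

Lemma br_iter k x : 1 <= dep (iter k par x) -> br (iter k par x) = br x.
Proof.
elim: k => [//|k IH] h; rewrite iterS in h *.
rewrite br_par //; apply: IH.
by move: h; rewrite (dep_par P); lia.
Qed.

Lemma dep_br x : x != c -> dep (br x) = 1.
Proof.
move=> hx; rewrite /br (dep_iter P).
have := pt_dep P hx; lia.
Qed.

Lemma par_br x : x != c -> par (br x) = c.
Proof.
move=> hx; rewrite /br -iterS; have := pt_dep P hx => ->.
by rewrite /= -iterS -(pt_dep P hx) (iter_dep P).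
Qed.

Lemma br_c : br c = c.
Proof. by rewrite /br (pt_dep0 P). Qed.

Lemma crossing x y : e x y -> br x != br y -> dep x + dep y <= 3.
Proof.
move=> hxy hb; have [i [j [hij he]]] := pt_near P hxy.
have [h0|h1] := leqP (dep (iter i par x)) 0.
  have h0' : dep (iter j par y) = 0 by rewrite -he; lia.
  move: h0 h0'; rewrite !(dep_iter P); lia.
have h1' : 1 <= dep (iter j par y) by rewrite -he.
by move: hb; rewrite -(br_iter h1) -(br_iter h1') he eqxx.
Qed.

Lemma nbrS a z : 3 <= dep a -> leaf par a -> (forall w, par w = par a -> leaf par w) ->
  stuck e par a -> e a z -> 2 <= dep z /\ br z = br a.
Proof.
move=> hd la ls /andP [s1 s2] haz.
have d1 := dep_iter P 1 a; have d2 := dep_iter P 2 a; simpl in d1, d2.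
case: (nbr P Hirr la ls haz) => [->|[hz|[hz|[hz|hz]]]].
- by split; [lia|rewrite br_par //; lia].
- by move: s1; rewrite -hz haz.
- by move: s2; rewrite -hz haz.
- have hzc : z != c.
    apply/eqP => hzc; move: hz; rewrite hzc (pt_root P) => hc.
    by move: d1; rewrite -hc (pt_dep0 P); lia.
  split; first by rewrite (pt_dep P hzc) hz; lia.
  rewrite -(br_par (x := z)) hz ?br_par //; lia.
- have hzc : z != c.
    apply/eqP => hzc; move: hz; rewrite hzc (pt_root P) => hc.
    by move: d2; rewrite -hc (pt_dep0 P); lia.
  split; first by rewrite (pt_dep P hzc) hz; lia.
  have -> : br z = br (par z) by rewrite br_par // hz; lia.
  rewrite hz br_par; last lia.
  by rewrite br_par //; lia.
Qed.

Lemma both_stuck a b : diam_le e 3 ->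
  3 <= dep a -> leaf par a -> (forall w, par w = par a -> leaf par w) -> stuck e par a ->
  3 <= dep b -> leaf par b -> (forall w, par w = par b -> leaf par w) -> stuck e par b ->
  br a != br b -> False.
Proof.
move=> hdiam hda la lsa sa hdb lb lsb sb hab.
have [m [hm [p [sp pp lp]]]] := hdiam a b.
case: p sp pp lp => [|w1 [|w2 [|w3 [|w4 p]]]] //= sp pp lp; try lia.
- by move: hab; rewrite lp eqxx.
- have hab' := pp; rewrite andbT lp in hab'.
  by have := crossing hab' hab; lia.
- move: pp => /and3P [h1 h2 _]; rewrite lp in h2.
  have [dw bw] := nbrS hda la lsa sa h1.
  have := crossing h2; rewrite bw => /(_ hab); lia.
- move: pp => /and4P [h1 h2 h3 _]; rewrite lp in h3.
  have [dw1 bw1] := nbrS hda la lsa sa h1.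
  have h3s : e b w2 by rewrite Hsym.
  have [dw2 bw2] := nbrS hdb lb lsb sb h3s.
  have := crossing h2; rewrite bw1 bw2 => /(_ hab); lia.
Qed.

End Br.

Section Reroot.
Variables (V : finType) (e : rel V) (c : V) (par : V -> V) (dep : V -> nat).
Hypothesis P : ptree e c par dep.
Hypothesis Hsym : symmetric e.
Variable a1 : V.
Hypothesis Ha1 : a1 != c.
Hypothesis Hpa1 : par a1 = c.

Local Notation par1 := (rpar c a1 par).
Local Notation dep1 := (rdep a1 par dep).

Lemma dep_a1 : dep a1 = 1.
Proof. by rewrite (pt_dep P Ha1) Hpa1 (pt_dep0 P). Qed.

Lemma br_a1 : br par dep a1 = a1.
Proof. by rewrite /br dep_a1. Qed.

Lemma pe_reroot x y : pe par1 x y = pe par x y.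
Proof.
have ca : c != a1 by rewrite eq_sym.
have ac : a1 != c by [].
rewrite /pe /rpar.
case: (eqVneq x y) => [<-|nxy] //=.
have nyx : y != x by rewrite eq_sym.
case: (eqVneq x a1) => [hx|hxa].
  rewrite hx in nxy nyx *; rewrite (negbTE nxy) Hpa1 /=.
  case: (eqVneq y c) => [hy|hyc].
    by rewrite hy (negbTE ca) !eqxx.
  by rewrite (negbTE nyx).
case: (eqVneq x c) => [hx|hxc].
  rewrite hx in nxy nyx hxa *; rewrite (pt_root P).
  case: (eqVneq y a1) => [hy|hya].
    by rewrite hy Hpa1 !eqxx orbT.
  by rewrite (negbTE nyx) (negbTE nxy).
case: (eqVneq y a1) => [hy|hya].
  by rewrite hy Hpa1 [a1 == x]eq_sym (negbTE hxa) [c == x]eq_sym (negbTE hxc).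
case: (eqVneq y c) => [hy|hyc] //.
by rewrite hy (pt_root P) [a1 == x]eq_sym (negbTE hxa) [c == x]eq_sym (negbTE hxc).
Qed.

Lemma reroot_ptree : ptree e a1 par1 dep1.
Proof.
have ca : c != a1 by rewrite eq_sym.
split.
- by rewrite /rpar eqxx.
- by rewrite /rdep br_a1 eqxx dep_a1.
- move=> x hxa; have [->|hxc] := eqVneq x c.
  + rewrite /rpar (negbTE ca) eqxx /rdep br_a1 eqxx dep_a1 (br_c P) (negbTE ca) (pt_dep0 P).
    by split => //; rewrite Hsym -{1}Hpa1 (pt_edge P Ha1).
  + rewrite /rpar (negbTE hxa) (negbTE hxc); split; last exact: (pt_edge P hxc).
    have hd := pt_dep P hxc.
    rewrite /rdep; case: (eqVneq (br par dep x) a1) => hb.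
    * have h2 : 2 <= dep x.
        rewrite hd; case: (dep (par x)) hd => // hd'; exfalso.
        by move: hb; rewrite /br hd' /= => hb; rewrite hb eqxx in hxa.
      by rewrite (br_par P) //; [rewrite hb eqxx; lia|lia].
    * have [hpc|hpc] := eqVneq (par x) c.
        by rewrite hpc (br_c P) (negbTE ca) (pt_dep0 P) hd hpc (pt_dep0 P).
      have h1 : 1 <= dep (par x) by rewrite (pt_dep P hpc).
      by rewrite (br_par P) // (negbTE hb) hd.
- move=> x y hxy; apply: dist_near.
  have := near_dist (pt_near P hxy).
  move=> [k [hk [p [sp pp lp]]]]; exists k; split => //; exists p; split => //.
  by apply: sub_path pp => u v; rewrite pe_reroot.
Qed.

Lemma rdep_le H x : (br par dep x == a1 -> dep x <= H.+1) ->
  (br par dep x != a1 -> (dep x).+2 <= H.+1) -> dep1 x <= H.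
Proof. by rewrite /rdep; case: eqP => _ h1 h2; [have := h1 isT|have := h2 isT]; lia. Qed.

End Reroot.

Section Cyc.
Variables (V : finType) (t : rel V) (c : V) (par : V -> V) (dep : V -> nat).
Hypothesis Hsym : symmetric t.
Hypothesis Hirr : irreflexive t.
Hypothesis Hac : acyclic t.
Hypothesis Hroot : par c = c.
Hypothesis Hdep0 : dep c = 0.
Hypothesis Hpar : forall x, x != c -> dep x = (dep (par x)).+1 /\ t (par x) x.
Hypothesis Hdist : forall x y, t x y -> dep y <= (dep x).+1.

Lemma P0 : ptree (pe par) c par dep.
Proof.
split => //.
- move=> x hx; have [hd _] := Hpar hx; split => //.
  rewrite /pe eqxx /= andbT; apply/eqP => hxp.
  by move: hd; rewrite -hxp; lia.
- move=> x y /andP [_ /orP [/eqP h|/eqP h]].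
  + by exists 1, 0; split.
  + by exists 0, 1; split.
Qed.

Lemma up_path k z : k <= dep z -> path t z (traject par (par z) k).
Proof.
elim: k z => [//|k IH] z hk /=.
have hz : z != c by apply/eqP => hz; move: hk; rewrite hz Hdep0.
have [hd ht] := Hpar hz.
rewrite Hsym ht /=; apply: IH; lia.
Qed.

Lemma down_path k z : k <= dep z -> path t (iter k par z) (rev (traject par z k)).
Proof.
elim: k => [//|k IH] hk.
rewrite trajectSr rev_rcons /= IH ?andbT; last lia.
have hz : iter k par z != c.
  apply/eqP => hz; have := dep_iter P0 k z; rewrite hz Hdep0; lia.
by have [_ ->] := Hpar hz.
Qed.

Lemma mem_traj y z k : y \in traject par z k -> exists2 m, m < k & y = iter m par z.
Proof. by move/trajectP. Qed.

Lemma traj_uniq k z : k <= (dep z).+1 -> uniq (traject par z k).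
Proof.
elim: k z => [//|k IH] z hk /=.
rewrite IH ?andbT; last first.
  case: k {IH} hk => [//|k] hk.
  have hz : z != c by apply/eqP => hz; move: hk; rewrite hz Hdep0.
  have [hd _] := Hpar hz; lia.
apply/negP => /mem_traj [m hm he].
case: k {IH} hk hm => [//|k] hk hm.
have hz : z != c by apply/eqP => hz; move: hk; rewrite hz Hdep0.
have := dep_iter P0 m (par z); rewrite -he (dep_par P0); lia.
Qed.

Lemma tree_pe x y : t x y -> pe par x y.
Proof.
move=> hxy; rewrite /pe; have nxy : x != y by apply: contraTneq hxy => ->; rewrite Hirr.
rewrite nxy /=; apply/negPn/negP; rewrite negb_or => /andP [n1 n2].
have dxy : dep y <= (dep x).+1 /\ dep x <= (dep y).+1.
  by split; apply: Hdist => //; rewrite Hsym.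
pose mt s := [exists i : 'I_s.+1, iter i par x == iter (s - i) par y].
have mtI : forall a b, iter a par x = iter b par y -> mt (a + b).
  move=> a b hab; apply/existsP; exists (Ordinal (leq_addr b a : a < (a + b).+1)) => /=.
  by rewrite addKn hab.
have exm : exists s, mt s.
  by exists (dep x + dep y); apply: mtI; rewrite !(iter_dep P0).
case: (ex_minnP exm) => s /existsP [[i hi] /= /eqP hw] hmin.
move: hw; move Hjdef: (s - i) => j hw.
have hs : s = i + j by lia.
clear Hjdef.
have hmin' : forall a b, iter a par x = iter b par y -> s <= a + b.
  by move=> a b hab; apply: hmin; apply: mtI.
have hix : i <= dep x.
  rewrite leqNgt; apply/negP => hlt.
  have := hmin' (dep x) j; rewrite (iter_dep P0) -hw (iter_ge P0) //; last lia.
  by move/(_ erefl); lia.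
have hjy : j <= dep y.
  rewrite leqNgt; apply/negP => hlt.
  have := hmin' i (dep y); rewrite (iter_dep P0) hw (iter_ge P0) //; last lia.
  by move/(_ erefl); lia.
have dw1 := dep_iter P0 i x; have dw2 := dep_iter P0 j y.
have i1 : 1 <= i.
  case: i hi hw hix dw1 hs {hmin'} => [|i] // _ /= hw _ _ hs.
  case: j hw dw2 hjy hs => [|[|j]] /= hw dw2 hjy hs.
  - by move: nxy; rewrite hw eqxx.
  - by move: n2; rewrite hw eqxx.
  - by move: dw2; rewrite -hw; case: dxy; lia.
have j1 : 1 <= j.
  case: j hw dw2 hjy hs {hmin'} => [|j] /= hw dw2 hjy hs //.
  case: i hi hw dw1 hix hs i1 => [|[|i]] _ /= hw dw1 hix hs i1 //.
  - by move: n1; rewrite -hw eqxx.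
  - by move: dw1; rewrite hw; case: dxy; lia.
pose p := traject par (par x) i ++ rev (traject par y j).
have pp : path t x p.
  rewrite cat_path up_path // last_traject hw /=.
  exact: down_path.
have lp : last x p = y.
  rewrite /p last_cat.
  have -> : traject par y j = y :: traject par (par y) j.-1 by case: (j) j1.
  by rewrite rev_cons last_rcons.
have up : uniq (x :: p).
  rewrite /p -cat_cons cat_uniq rev_uniq.
  rewrite (traj_uniq (k := i.+1)) /=; last lia.
  rewrite (traj_uniq (k := j)) ?andbT; last lia.
  apply/hasPn => z; rewrite mem_rev => /mem_traj [b hb ->].
  apply/negP => /(mem_traj (k := i.+1)) [a ha hab].
  by have := hmin' a b (esym hab); lia.
have sp : 2 <= size p by rewrite size_cat size_rev !size_traject; lia.
have := Hac up sp pp; rewrite lp Hsym hxy.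
by [].
Qed.

End Cyc.

Lemma extract (V : finType) (e t : rel V) (c : V) :
  simple_graph e -> tree_3_spanner e t -> exists par dep, ptree e c par dep.
Proof.
move=> [esym eirr] [[[tsym tirr] sub conn acyc] span].
pose wb n x := [exists p : n.-tuple V, path t c p && (last c p == x)].
have wbP1 : forall n x, walk t c x n -> wb n x.
  move=> n x [p [sp pp lp]]; have sp' : size p == n by apply/eqP.
  by apply/existsP; exists (Tuple sp'); rewrite /= pp lp eqxx.
have wbP2 : forall n x, wb n x -> walk t c x n.
  move=> n x /existsP [p /andP [pp /eqP lp]]; exists (val p); split => //.
  exact: size_tuple.
have ex : forall x, exists n, wb n x.
  move=> x; have [n [m [_ w]]] := conn c x; exists m; exact: wbP1.
pose dep x := ex_minn (ex x).
have depP : forall x, wb (dep x) x by move=> x; rewrite /dep; case: ex_minnP.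
have depM : forall x n, wb n x -> dep x <= n.
  by move=> x n hn; rewrite /dep; case: ex_minnP => m _; apply.
have dep0 : dep c = 0.
  apply/eqP; rewrite -leqn0; apply: depM; apply: wbP1; by exists [::].
have Hdist : forall x y, t x y -> dep y <= (dep x).+1.
  move=> x y hxy; apply: depM; apply: wbP1.
  have [p [sp pp lp]] := wbP2 _ _ (depP x).
  exists (rcons p y); split; first by rewrite size_rcons sp.
    by rewrite rcons_path pp lp hxy.
  by rewrite last_rcons.
have exPar : forall x, x != c -> exists y, t y x && (dep y == (dep x).-1).
  move=> x hx; have [p [sp pp lp]] := wbP2 _ _ (depP x).
  case/lastP: p sp pp lp => [|q z] sp pp lp.
    by move: hx; rewrite -lp eqxx.
  rewrite last_rcons in lp; rewrite lp in pp.
  move: pp; rewrite rcons_path => /andP [pq hq].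
  exists (last c q); rewrite hq /=.
  have h1 : dep (last c q) <= (dep x).-1.
    apply: depM; apply: wbP1; exists q; split => //.
    by rewrite -sp size_rcons.
  have h2 := Hdist _ _ hq.
  by apply/eqP; lia.
pose par x := if x == c then c else odflt c [pick y | t y x && (dep y == (dep x).-1)].
have Hroot : par c = c by rewrite /par eqxx.
have Hpar : forall x, x != c -> dep x = (dep (par x)).+1 /\ t (par x) x.
  move=> x hx.
  have hpos : 0 < dep x.
    rewrite lt0n; apply/eqP => h0; have [p [sp pp lp]] := wbP2 _ _ (depP x).
    by move: sp lp pp; rewrite h0; case: p => // _ /= hl _; move: hx; rewrite hl eqxx.
  rewrite /par (negbTE hx).
  case: pickP => [y /andP [hy /eqP dy]|hn] /=.
    by split => //; rewrite dy; lia.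
  by exfalso; have [y hy] := exPar x hx; have := hn y; rewrite hy.
have tpe : forall x y, t x y -> pe par x y.
  move=> x y; exact: (@tree_pe V t c par dep tsym tirr acyc Hroot dep0 Hpar Hdist x y).
exists par, dep; split => //.
- move=> x hx; have [h1 h2] := Hpar x hx; split => //.
  by rewrite esym; apply: sub.
- move=> x y hxy; apply: dist_near.
  have := span x y 1 (dist_le_edge hxy).
  move=> [k [hk [p [sp pp lp]]]]; exists k; split => //; exists p; split => //.
  by apply: sub_path pp.
Qed.

Lemma mu_le2 (V : finType) (par : V -> V) (dep : V -> nat) : mu par dep <= (Hm dep).*2.
Proof. by rewrite /mu; case: ifP => _ //; rewrite leq_pred. Qed.

Lemma mu_le1 (V : finType) (par : V -> V) (dep : V -> nat) :
  ~~ deep2 par dep -> mu par dep <= ((Hm dep).*2).-1.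
Proof. by rewrite /mu => /negbTE ->. Qed.

Lemma Hm_ub (V : finType) (dep : V -> nat) H : (forall x, dep x <= H) -> Hm dep <= H.
Proof. by move=> h; apply/bigmax_leqP => x _; apply: h. Qed.

Section Step.
Variables (V : finType) (e : rel V) (c : V) (par : V -> V) (dep : V -> nat).
Hypothesis P : ptree e c par dep.
Hypothesis Hirr : irreflexive e.
Hypothesis Hsym : symmetric e.
Hypothesis Hdiam : diam_le e 3.

Local Notation H := (Hm dep).
Local Notation brr := (br par dep).

Lemma depH x : dep x <= H.
Proof. exact: leq_bigmax. Qed.

Lemma leafH a : 1 <= dep a -> dep a = H -> leaf par a.
Proof.
move=> h1 hH z; apply/eqP => hz.
have hzc : z != c by apply: contraTneq h1 => hzc; rewrite -hz hzc (pt_root P) (pt_dep0 P).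
by have := depH z; rewrite (pt_dep P hzc) hz hH ltnn.
Qed.

Lemma sib a z : 2 <= dep a -> par z = par a -> [/\ z != c, dep z = dep a & brr z = brr a].
Proof.
move=> h2 hz.
have hac : a != c by apply: (neq_c P); lia.
have hp : 1 <= dep (par a) by move: h2; rewrite (pt_dep P hac); lia.
have hzc : z != c.
  apply: contraTneq hp => hzc; move: hz; rewrite hzc (pt_root P) => <-.
  by rewrite (pt_dep0 P).
split => //; first by rewrite (pt_dep P hzc) (pt_dep P hac) hz.
by rewrite -(br_par P (x := z)) hz ?(br_par P) //.
Qed.

Lemma notstuck_tau a : ~~ stuck e par a -> e a (tau e par a).
Proof. by rewrite /stuck /tau negb_and !negbK; case: ifP => // _ /= ->. Qed.

Lemma step : 6 <= mu par dep ->
  exists c' par' dep', ptree e c' par' dep' /\ mu par' dep' < mu par dep.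
Proof.
move=> h6.
case hd: (deep2 par dep).
-
  have hmu : mu par dep = H.*2 by rewrite /mu hd.
  have H3 : 3 <= H by move: h6; rewrite hmu -muln2; lia.
  pose bad := [pred a | (dep a == H) && stuck e par a].
  pose b0 := if [pick a | bad a] is Some a0 then brr a0 else c.
  pose M := [pred a | (dep a == H) && (brr a != b0)].
  have HM1 : forall a, M a -> dep a = H by move=> a /andP [/eqP].
  have HM2 : forall a, M a -> leaf par a by move=> a /HM1 ha; apply: leafH => //; lia.
  have HM3 : forall a z, M a -> par z = par a -> leaf par z.
    move=> a z ha hz; have h2 : 2 <= dep a by rewrite (HM1 _ ha); lia.
    have [_ dz _] := sib h2 hz.
    by apply: leafH; rewrite dz (HM1 _ ha) //; lia.
  have HM4 : forall a z, M a -> par z = par a -> e a z -> M z.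
    move=> a z ha hz _; have h2 : 2 <= dep a by rewrite (HM1 _ ha); lia.
    have [_ dz bz] := sib h2 hz.
    by move: ha; rewrite /M /= dz bz.
  have HM5 : forall a, M a -> e a (tau e par a).
    move=> a ha; apply: notstuck_tau; apply/negP => sa.
    have hb : bad a by rewrite /bad /= (HM1 _ ha) eqxx sa.
    have h3a : 3 <= dep a by rewrite (HM1 _ ha); lia.
    have hba : brr a != b0 by case/andP: ha.
    move: hba; rewrite /b0; case: pickP => [a0 ba0|]; last by move/(_ a); rewrite hb.
    move=> hba; move: ba0 => /andP [/eqP da0 sa0].
    apply: (both_stuck P Hirr Hsym Hdiam h3a (HM2 _ ha) (fun w => HM3 a w ha) sa _ _ _ sa0 hba).
    + by rewrite da0.
    + by apply: leafH; lia.
    + move=> w hw; have h2 : 2 <= dep a0 by lia.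
      have [_ dz _] := sib h2 hw; apply: leafH; lia.
  have P' := move_ptree P Hirr Hsym H3 HM1 HM2 HM3 HM4 HM5.
  exists c, (mpar e par M), (mdep e par dep M); split => //.
  rewrite hmu.
  set par' := mpar e par M; set dep' := mdep e par dep M.
  have hle : Hm dep' <= H := Hm_le P H3 HM1.
  case: (ltnP (Hm dep') H) => hlt.
    by apply: leq_ltn_trans (mu_le2 par' dep') _; rewrite -!muln2; lia.
  have eqH : Hm dep' = H by apply/eqP; rewrite eqn_leq hle hlt.
  have key : forall x, dep' x = H -> br par' dep' x = b0.
    move=> x hx.
    have nM : ~~ M x.
      apply/negP => hm; have := mdep_lt P H3 HM1 hm; rewrite -/dep' hx.
      by have := depH x; lia.
    rewrite (br_keep e dep HM2 nM).
    move: hx; rewrite /dep' /mdep (negbTE nM) => hx.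
    by apply/eqP; move: nM; rewrite /M /= hx eqxx /= negbK.
  have nd : ~~ deep2 par' dep'.
    apply/existsP => -[x /existsP [y /and3P [hx hy hb]]].
    by move: hb; rewrite eqH in hx hy; rewrite (key x (eqP hx)) (key y (eqP hy)) eqxx.
  by apply: leq_ltn_trans (mu_le1 nd) _; rewrite eqH -muln2; lia.
- have hmu : mu par dep = H.*2.-1 by rewrite /mu hd.
  have H4 : 4 <= H by move: h6; rewrite hmu -muln2; lia.
  have [ast has] : {ast : V | H = dep ast}.
    by apply: eq_bigmax; apply/card_gt0P; exists c.
  have hasc : ast != c by apply: (neq_c P); lia.
  set a1 := brr ast.
  have a1c : a1 != c by apply: (neq_c P); rewrite (dep_br P hasc).
  have pa1 : par a1 = c by apply: (par_br P hasc).
  have da1 : dep a1 = 1 by apply: (dep_br P hasc).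
  have allA : forall x, dep x = H -> brr x = a1.
    move=> x hx; apply/eqP; apply: contraFT hd => hb.
    apply/existsP; exists x; apply/existsP; exists ast.
    by rewrite hx -has eqxx hb.
  case: (boolP [forall a, (dep a == H) ==> ~~ stuck e par a]) => hgood.
  + pose M := [pred a | dep a == H].
    have H3 : 3 <= H by lia.
    have HM1 : forall a, M a -> dep a = H by move=> a /eqP.
    have HM2 : forall a, M a -> leaf par a by move=> a /HM1 ha; apply: leafH => //; lia.
    have HM3 : forall a z, M a -> par z = par a -> leaf par z.
      move=> a z ha hz; have h2 : 2 <= dep a by rewrite (HM1 _ ha); lia.
      have [_ dz _] := sib h2 hz.
      by apply: leafH; rewrite dz (HM1 _ ha) //; lia.
    have HM4 : forall a z, M a -> par z = par a -> e a z -> M z.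
      move=> a z ha hz _; have h2 : 2 <= dep a by rewrite (HM1 _ ha); lia.
      have [_ dz _] := sib h2 hz.
      by rewrite /M /= dz (HM1 _ ha).
    have HM5 : forall a, M a -> e a (tau e par a).
      move=> a ha; apply: notstuck_tau.
      by move/forallP: hgood => /(_ a) /implyP; apply; rewrite (HM1 _ ha).
    have P' := move_ptree P Hirr Hsym H3 HM1 HM2 HM3 HM4 HM5.
    exists c, (mpar e par M), (mdep e par dep M); split => //.
    rewrite hmu.
    set par' := mpar e par M; set dep' := mdep e par dep M.
    have hb : Hm dep' <= H.-1.
      apply: Hm_ub => x; case hx: (M x).
        by have := mdep_lt P H3 HM1 hx; rewrite -/dep'; have := depH x; lia.
      rewrite /dep' /mdep hx; have := depH x.
      by move: hx; rewrite /M /= => /negbT /eqP hx; lia.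
    by apply: leq_ltn_trans (mu_le2 par' dep') _; rewrite -!muln2; lia.
  + have [a0 ha0] : {a0 | (dep a0 == H) && stuck e par a0}.
      case: (pickP [pred a | (dep a == H) && stuck e par a]) => [a0 ha0|hn]; first by exists a0.
      exfalso; move: hgood => /negP; apply; apply/forallP => a; apply/implyP => ha.
      by apply/negP => sa; have := hn a; rewrite /= ha sa.
    move: ha0 => /andP [/eqP da0 sa0].
    pose M := [pred b | (dep b == H.-1) && (brr b != a1)].
    have H3 : 3 <= H.-1 by lia.
    have HM1 : forall a, M a -> dep a = H.-1 by move=> a /andP [/eqP].
    have HM2 : forall a, M a -> leaf par a.
      move=> b hb z; apply/eqP => hz.
      have db := HM1 _ hb.
      have hzc : z != c.
        apply/eqP => hzc; move: hz; rewrite hzc (pt_root P) => hcb.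
        by move: db; rewrite -hcb (pt_dep0 P); lia.
      have dz : dep z = H by rewrite (pt_dep P hzc) hz db; lia.
      have bz : brr z = brr b by rewrite -hz (br_par P) // hz db; lia.
      by move: hb => /andP [_]; rewrite -bz (allA _ dz) eqxx.
    have HMs : forall a z, M a -> par z = par a -> M z.
      move=> a z ha hz; have h2 : 2 <= dep a by rewrite (HM1 _ ha); lia.
      have [_ dz bz] := sib h2 hz.
      by move: ha; rewrite /M /= dz bz.
    have HM3 : forall a z, M a -> par z = par a -> leaf par z.
      by move=> a z ha hz; apply: HM2; apply: HMs ha hz.
    have HM4 : forall a z, M a -> par z = par a -> e a z -> M z.
      by move=> a z ha hz _; apply: HMs ha hz.
    have HM5 : forall a, M a -> e a (tau e par a).
      move=> b hb; apply: notstuck_tau; apply/negP => sb.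
      have h3a : 3 <= dep a0 by lia.
      have h3b : 3 <= dep b by rewrite (HM1 _ hb).
      apply: (both_stuck P Hirr Hsym Hdiam h3a _ _ sa0 h3b (HM2 _ hb) (fun w => HM3 b w hb) sb).
      * by apply: leafH; lia.
      * move=> w hw; have h2 : 2 <= dep a0 by lia.
        have [_ dz _] := sib h2 hw; apply: leafH; lia.
      * by rewrite (allA _ da0) eq_sym; case/andP: hb.
    have P' := move_ptree P Hirr Hsym H3 HM1 HM2 HM3 HM4 HM5.
    set par' := mpar e par M; set dep' := mdep e par dep M.
    have na1 : ~~ M a1 by rewrite /M /= da1; apply/nandP; left; lia.
    have pa1' : par' a1 = c by rewrite /par' mpar_nM.
    have P'' := reroot_ptree P' Hsym a1c pa1'.
    exists a1, (rpar c a1 par'), (rdep a1 par' dep'); split => //.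
    rewrite hmu.
    have hb : Hm (rdep a1 par' dep') <= H.-1.
      apply: Hm_ub => x; apply: (rdep_le a1c).
        move=> _; have := mdep_le P H3 HM1 x; have := depH x; rewrite -/dep'; lia.
      move=> hbx; case hx: (M x).
        by have := mdep_lt P H3 HM1 hx; rewrite (HM1 _ hx) -/dep'; lia.
      have nM : ~~ M x by rewrite hx.
      move: hbx; rewrite /par' /dep' (br_keep e dep HM2 nM) /mdep hx => hbx.
      have hne : dep x != H by apply: contra hbx => /eqP /allA ->.
      have hne' : dep x != H.-1 by move: hx; rewrite /M /= hbx andbT => /negbT.
      by have := depH x; move: hne hne' => /eqP hne /eqP hne'; lia.
    by apply: leq_ltn_trans (mu_le2 _ _) _; rewrite -!muln2; lia.
Qed.

End Step.

Theorem lemma7 (V : finType) (e : rel V) :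
  simple_graph e -> diam_le e 3 ->
  (exists t : rel V, tree_3_spanner e t) ->
  exists t : rel V, tree_3_spanner e t /\ diam_le t 5.
Proof.
move=> hs hd [t ht].
case: (pickP (@predT V)) => [c _|h0]; last first.
  by exists t; split => // x; have := h0 x.
have [esym eirr] := hs.
have [par [dep P]] := extract c hs ht.
suff main : forall n c par dep, ptree e c par dep -> mu par dep <= n ->
    exists t : rel V, tree_3_spanner e t /\ diam_le t 5.
  exact: main _ _ _ _ P (leqnn _).
elim => [|n IH] c' par' dep' P' hn.
  exists (pe par'); split; first exact: pt_tree P' esym.
  by apply: mu_diam P' _; lia.
have [h5|h6] := leqP (mu par' dep') 5.
  exists (pe par'); split; first exact: pt_tree P' esym.
  exact: mu_diam P' h5.
have [c2 [par2 [dep2 [P2 hlt]]]] := step P' eirr esym hd h6.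
apply: IH P2 _; lia.
Qed.
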